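(* Let $N\ge1$, $K\ge2$ be integers and let $\alpha$ be a real number with $\alpha<\frac{2}{K}$. Then in $\mathcal{B}_\alpha(N,K)$ no pure strategy is weakly dominated by another pure strategy.
   Context: Fix integers $N\ge1$, $K\ge2$ and a real number $\alpha$. The Colonel Blotto game $\mathcal{B}_\alpha(N,K)$ is the two-player simultaneous-move game with players $A,B$, each with pure strategy set $S=\{s\in\{0,1,\ldots,N\}^K:\sum_{k=1}^K s_k=N\}$, in which the payoff of player $i$ at the pure profile $(s^i,s^{-i})$ is $\pi^i(s^i,s^{-i})=\sum_{k=1}^K\big(\mathbf 1[s^i_k>s^{-i}_k]+\tfrac{\alpha}{2}\mathbf 1[s^i_k=s^{-i}_k]\big)$. A pure strategy $s\in S$ is weakly dominated by a pure strategy $\hat s\in S$ if $\pi^i(s,t)\le\pi^i(\hat s,t)$ for all $t\in S$ and $\pi^i(s,t)<\pi^i(\hat s,t)$ for at least one $t\in S$. *)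

(* Defs.v *)
From mathcomp Require Import all_boot all_order all_algebra.
Set Implicit Arguments. Unset Strict Implicit. Unset Printing Implicit Defensive.
Import Order.TTheory GRing.Theory Num.Theory.
Local Open Scope ring_scope.

(* Colonel Blotto game B_alpha(N,K).
   A pure strategy is an allocation s : {ffun 'I_K -> 'I_N.+1} (entries in
   {0,...,N}) with total sum N. *)
Definition blotto_strategy (N K : nat) (s : {ffun 'I_K -> 'I_N.+1}) : bool :=
  (\sum_(k < K) (s k : nat) == N)%N.

Definition blotto_payoff (R : numDomainType) (N K : nat) (alpha : R)
    (s t : {ffun 'I_K -> 'I_N.+1}) : R :=
  \sum_(k < K) (((t k < s k)%N)%:R + alpha / 2%:R * ((s k == t k : bool))%:R).

Definition weakly_dominated (R : numDomainType) (N K : nat) (alpha : R)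
    (s shat : {ffun 'I_K -> 'I_N.+1}) : Prop :=
  (forall t, blotto_strategy t -> blotto_payoff alpha s t <= blotto_payoff alpha shat t)
  /\ (exists t, blotto_strategy t /\ blotto_payoff alpha s t < blotto_payoff alpha shat t).

(* Main.v *)
Require Import Defs.
From mathcomp Require Import all_boot all_order all_algebra.
From mathcomp Require Import reals.
From mathcomp Require Import lra.
Import Order.TTheory GRing.Theory Num.Theory.
Local Open Scope ring_scope.

Lemma exists_gt (N K : nat) (x y : {ffun 'I_K -> 'I_N.+1}) :
  blotto_strategy x -> blotto_strategy y -> x != y ->
  exists k, (y k < x k)%N.
Proof.
move=> /eqP hx /eqP hy neq.
case: (boolP [exists k, (y k < x k)%N]) => [/existsP//|/existsPn hall].
exfalso.
have [k0 hk0] : exists k, x k != y k.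
  case: (boolP [exists k, x k != y k]) => [/existsP//|/existsPn h].
  have exy : x = y by apply/ffunP => k; apply/eqP; move: (h k); rewrite negbK.
  by move: neq; rewrite exy eqxx.
have lt0 : (x k0 < y k0)%N.
  by rewrite ltn_neqAle; move: (hall k0); rewrite -leqNgt => ->; rewrite andbT.
have : (\sum_(k < K) (x k : nat) < \sum_(k < K) (y k : nat))%N.
  rewrite (bigD1 k0) //= [X in (_ < X)%N](bigD1 k0) //=.
  apply: leq_ltn_trans (_ : _ <= x k0 + \sum_(i < K | i != k0) (y i : nat))%N _.
    by rewrite leq_add2l; apply: leq_sum => i _; move: (hall i); rewrite -leqNgt.
  by rewrite ltn_add2r.
by rewrite hx hy ltnn.
Qed.

Lemma key (R : realType) (N K : nat) (alpha : R) (x y : {ffun 'I_K -> 'I_N.+1}) :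
  alpha < 2%:R / K%:R -> (0 < K)%N ->
  blotto_strategy x -> blotto_strategy y -> x != y ->
  blotto_payoff alpha y y < blotto_payoff alpha x y.
Proof.
move=> ha hK sx sy neq.
have [k0 hk0] := @exists_gt N K x y sx sy neq.
rewrite /blotto_payoff.
have -> : \sum_(k < K) (((y k < y k)%N)%:R + alpha / 2%:R * ((y k == y k : bool))%:R)
   = K%:R * (alpha / 2%:R) :> R.
  rewrite (eq_bigr (fun _ => alpha / 2%:R)); last by move=> i _; rewrite ltnn eqxx mulr1 add0r.
  by rewrite sumr_const card_ord mulr_natl.
rewrite big_split /= -mulr_sumr.
set a := \sum_(i < K) _.
set b := \sum_(i < K) _.
set u := \sum_(i < K) (1 - ((x i == y i : bool))%:R : R).
have hbu : b + u = K%:R.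
  rewrite /b /u -big_split /=.
  rewrite (eq_bigr (fun _ => 1)); last by move=> i _; rewrite addrC subrK.
  by rewrite sumr_const card_ord.
have hu0 : 0 <= u by apply: sumr_ge0 => i _; case: (_ == _); rewrite /= ?subrr ?subr0.
have hu1 : u <= K%:R by rewrite -hbu lerDr; apply: sumr_ge0 => i _; case: (_ == _).
have ha1 : 1 <= a.
  rewrite /a (bigD1 k0) //= hk0 lerDl; apply: sumr_ge0 => i _; exact: ler0n.
have hKp : 0 < K%:R :> R by rewrite ltr0n.
have hcK : alpha / 2%:R * K%:R < 1.
  have := ha; rewrite ltr_pdivlMr // => h.
  rewrite mulrAC ltr_pdivrMr //; lra.
have hcu : alpha / 2%:R * u < a.
  case: (lerP (alpha / 2%:R) 0) => hc.
    by apply: le_lt_trans (_ : _ <= 0) _; [exact: mulr_le0_ge0 | lra].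
  apply: le_lt_trans (_ : _ <= alpha / 2%:R * K%:R) _.
    by rewrite ler_pM2l.
  lra.
have -> : b = K%:R - u by rewrite -hbu addrK.
rewrite mulrBr [K%:R * _]mulrC; lra.
Qed.

Theorem proposition4 (R : realType) (N K : nat) (alpha : R) :
  (1 <= N)%N -> (2 <= K)%N -> alpha < 2%:R / K%:R ->
  forall s shat : {ffun 'I_K -> 'I_N.+1},
    blotto_strategy s -> blotto_strategy shat ->
    ~ weakly_dominated alpha s shat.
Proof.
move=> _ hK ha s shat ss sh [hle [t [_ hlt]]].
case: (eqVneq s shat) => [e|neq].
  by move: hlt; rewrite e ltxx.
have := @key R N K alpha s shat ha (ltn_trans (isT : (0 < 1)%N) hK) ss sh neq.
by rewrite ltNge hle.
Qed.
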